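(* Let $u$ and $v$ be linear functionals on $\mathbb C[\boldsymbol x]$ and $\hat u=u+v$, with $u$ and $\hat u$ quasi-definite. Then for every $n\in\mathbb Z_+$ $$\hat P_{[n]}(\boldsymbol x)=P_{[n]}(\boldsymbol x)-\big\langle v,\hat P_{[n]}(\boldsymbol y)K_{n-1}(\boldsymbol y,\boldsymbol x)\big\rangle,\qquad \hat H_{[n]}=H_{[n]}+\big\langle v,\hat P_{[n]}(\boldsymbol x)\big(P_{[n]}(\boldsymbol x)\big)^\top\big\rangle,$$ where $v$ acts on the variable $\boldsymbol y$ in the first formula.
   Context: Multi-indices ordered by graded lexicographic order; $\chi(\boldsymbol x)$ the semi-infinite vector of monomials with blocks $\chi_{[k]}=(\boldsymbol x^{\boldsymbol\alpha})_{|\boldsymbol\alpha|=k}$. For a linear functional $u$ on $\mathbb C[\boldsymbol x]$ (applied entrywise to matrices), moment matrix $G=\langle u,\chi\chi^\top\rangle$; $u$ is quasi-definite if all block truncations $G^{[k]}$ (block rows/columns $0,\dots,k-1$) are nonsingular; then $G=S^{-1}HS^{-\top}$ with $S$ block lower unitriangular, $H$ block diagonal with blocks $H_{[k]}$, and $P=S\chi$ with blocks $P_{[k]}$ are the monic multivariate orthogonal polynomials. Hatted objects refer to $\hat u$. Christoffel–Darboux kernel $K_n(\boldsymbol x,\boldsymbol y)=\sum_{m=0}^n P_{[m]}(\boldsymbol x)^\top H_{[m]}^{-1}P_{[m]}(\boldsymbol y)$, $K_{-1}=0$. *)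

(* Defs.v *)
From HB Require Import structures.
From mathcomp Require Import all_boot all_order all_algebra.
From mathcomp Require Import mpoly.

Set Implicit Arguments.
Unset Strict Implicit.
Unset Printing Implicit Defensive.

Import Order.TTheory GRing.Theory.
Local Open Scope ring_scope.

Section MOP.
Variables (F : fieldType) (D : nat).

(* multi-indices of degree k, ordered (graded) lexicographically:
   within one degree block, x1^2, x1 x2, x2^2, ... i.e. decreasing in the
   library's lexicographic order on multinomials *)
Definition mons (k : nat) : seq 'X_{1..D} :=
  sort (fun a b => mnmc_le b a)
    [seq bmnm m | m <- enum [pred m : 'X_{1..D < k.+1} | mdeg (bmnm m) == k]].

Definition rk (k : nat) : nat := size (mons k).

Definition chi (k : nat) : 'cV[{mpoly F[D]}]_(rk k) :=
  \col_(i < rk k) 'X_[nth 0%MM (mons k) i].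

Definition monsT (k : nat) : seq 'X_{1..D} :=
  flatten [seq mons j | j <- iota 0 k].

Definition chiT (k : nat) : 'cV[{mpoly F[D]}]_(size (monsT k)) :=
  \col_(i < size (monsT k)) 'X_[nth 0%MM (monsT k) i].

Definition lfun := {linear {mpoly F[D]} -> F^o}.

Definition Gblk (u : lfun) (k l : nat) : 'M[F]_(rk k, rk l) :=
  map_mx u (chi k *m (chi l)^T).

Definition Gtrunc (u : lfun) (k : nat) : 'M[F]_(size (monsT k)) :=
  map_mx u (chiT k *m (chiT k)^T).

Definition quasi_definite (u : lfun) : Prop :=
  forall k, Gtrunc u k \in unitmx.

(* semi-infinite block matrices over F, indexed by block indices *)
Definition blockmx := forall i j : nat, 'M[F]_(rk i, rk j).
Definition blockdiag := forall i : nat, 'M[F]_(rk i).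

(* (S G S^T)_{[i],[j]}, a finite sum since S is block lower triangular *)
Definition SGSt (u : lfun) (S : blockmx) (i j : nat) : 'M[F]_(rk i, rk j) :=
  \sum_(k < i.+1) \sum_(l < j.+1) (S i k *m Gblk u k l *m (S j l)^T).

(* G = S^{-1} H S^{-T}, S block lower unitriangular, H block diagonal
   (stated equivalently as S G S^T = H) *)
Definition gauss_borel (u : lfun) (S : blockmx) (H : blockdiag) : Prop :=
  [/\ (forall i j, (i < j)%N -> S i j = 0),
      (forall i, S i i = 1%:M),
      (forall i j, i != j -> SGSt u S i j = 0) &
      (forall i, SGSt u S i i = H i)].

Definition Pblk (S : blockmx) (n : nat) : 'cV[{mpoly F[D]}]_(rk n) :=
  \sum_(k < n.+1) (map_mx (fun c : F => c%:MP_[D]) (S n k) *m chi k).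

(* polynomials in (y, x): outer variables y, coefficients in C[x] *)
Definition polyYX := {mpoly {mpoly F[D]}[D]}.

Definition inY (p : {mpoly F[D]}) : polyYX := map_mpoly (fun c : F => c%:MP_[D]) p.
Definition inX (p : {mpoly F[D]}) : polyYX := p%:MP_[D].

(* K_{n-1}(y, x) = sum_{m<n} P_[m](y)^T H_[m]^{-1} P_[m](x); K_{-1} = 0 *)
Definition CDkernel (S : blockmx) (H : blockdiag) (n : nat) : polyYX :=
  \sum_(m < n)
    ((map_mx inY (Pblk S m))^T *m map_mx (fun c : F => c%:MP_[D]%:MP_[D]) (invmx (H m))
       *m map_mx inX (Pblk S m)) ord0 ord0.

(* <v_y, q(y,x)> : v acting on the variable y, giving a polynomial in x *)
Definition actY (v : lfun) (q : polyYX) : {mpoly F[D]} :=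
  \sum_(m <- msupp q) (q@_m * (v 'X_[m])%:MP_[D]).

End MOP.

(* Main.v *)
Require Import Defs.
From HB Require Import structures.
From mathcomp Require Import all_boot all_order all_algebra.
From mathcomp Require Import mpoly ring.
Import GRing.Theory.
Local Open Scope ring_scope.
Set Implicit Arguments.
Unset Strict Implicit.

Section M.
Variable D : nat.
Lemma mem_mons k (mm : 'X_{1..D}) : (mm \in mons D k) = (mdeg mm == k).
Proof.
rewrite /mons mem_sort; apply/mapP/eqP.
  by case=> b; rewrite mem_enum inE => /eqP Hb ->.
move=> Hd; have Hb : (mdeg mm < k.+1)%N by rewrite Hd.
by exists (BMultinom Hb) => //; rewrite mem_enum inE /= Hd.
Qed.

Lemma uniq_mons k : uniq (mons D k).
Proof.
rewrite /mons sort_uniq map_inj_uniq ?enum_uniq //.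
by move=> [a ?] [b ?] /= eab; subst b; congr BMultinom; apply: bool_irrelevance.
Qed.

Lemma mem_monsT k (mm : 'X_{1..D}) : (mm \in monsT D k) = (mdeg mm < k)%N.
Proof.
rewrite /monsT; apply/flatten_mapP/idP.
  by case=> j; rewrite mem_iota add0n => /andP[_ jk]; rewrite mem_mons => /eqP->.
by move=> H; exists (mdeg mm); rewrite ?mem_iota ?mem_mons //=.
Qed.

Lemma uniq_monsT k : uniq (monsT D k).
Proof.
elim: k => [//|k IH]; rewrite /monsT -addn1 iotaD map_cat flatten_cat cat_uniq.
rewrite -/(monsT D k) IH /= cats0 uniq_mons andbT.
apply/hasPn => mm; rewrite mem_mons mem_monsT => /eqP->; by rewrite ltnn.
Qed.

Lemma big_msupp_sub (T : nzRingType) (q : {mpoly T[D]}) (V : nmodType)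
  (f : 'X_{1..D} -> V) s :
  uniq s -> {subset msupp q <= s} -> (forall m, m \notin msupp q -> f m = 0) ->
  \sum_(m <- msupp q) f m = \sum_(m <- s) f m.
Proof.
move=> us sub f0; rewrite [RHS](bigID (mem (msupp q))) /= [X in _ + X]big1 ?addr0;
  last by move=> m /f0.
rewrite -[RHS]big_filter; apply: perm_big; apply: uniq_perm => //.
  exact: filter_uniq.
by move=> m; rewrite mem_filter; case H: (m \in msupp q); rewrite //= sub.
Qed.
End M.

Section A.
Variables (F : fieldType) (D : nat).
Local Notation R := {mpoly F[D]}.
Implicit Type v : lfun F D.

Lemma actYE v (q : polyYX F D) s : uniq s -> {subset msupp q <= s} ->
  actY v q = \sum_(m <- s) q@_m * (v 'X_[m])%:MP_[D].
Proof.
move=> us sub; rewrite /actY; apply: big_msupp_sub => // m.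
by rewrite -mcoeff_eq0 => /eqP->; rewrite mul0r.
Qed.

Lemma actYD v (q1 q2 : polyYX F D) : actY v (q1 + q2) = actY v q1 + actY v q2.
Proof.
set s := undup (msupp q1 ++ msupp q2 ++ msupp (q1 + q2)).
have us : uniq s by apply: undup_uniq.
rewrite !(@actYE v _ s) //; first last.
- by move=> m Hm; rewrite mem_undup !mem_cat Hm ?orbT.
- by move=> m Hm; rewrite mem_undup !mem_cat Hm ?orbT.
- by move=> m Hm; rewrite mem_undup !mem_cat Hm ?orbT.
by rewrite -big_split; apply: eq_bigr => m _; rewrite mcoeffD mulrDl.
Qed.

Lemma actY0 v : actY v 0 = 0.
Proof. by rewrite /actY msupp0 big_nil. Qed.

Lemma actY_sum v I (r : seq I) (P : pred I) (f : I -> polyYX F D) :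
  actY v (\sum_(i <- r | P i) f i) = \sum_(i <- r | P i) actY v (f i).
Proof. exact: (big_morph _ (actYD v) (actY0 v)). Qed.

Lemma actY_YX v (a b : R) : actY v (inY a * inX b) = (v a)%:MP_[D] * b.
Proof.
set q := inY a * inX b.
have qE m : q@_m = (a@_m)%:MP_[D] * b.
  by rewrite /q /inX mulrC mcoeffCM /inY mcoeff_map_mpoly mulrC.
set s := undup (msupp a ++ msupp q).
have us : uniq s by apply: undup_uniq.
rewrite (@actYE v _ s) //; last by move=> m Hm; rewrite mem_undup !mem_cat Hm ?orbT.
rewrite [X in v X](mpolyE a) raddf_sum /=.
rewrite (@big_msupp_sub _ _ _ _ (fun m => v (a@_m *: 'X_[m])) s) //; first last.
- by move=> m; rewrite -mcoeff_eq0 => /eqP->; rewrite scale0r raddf0.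
- by move=> m Hm; rewrite mem_undup !mem_cat Hm ?orbT.
rewrite rmorph_sum mulr_suml; apply: eq_bigr => m _.
by rewrite qE linearZ /= mpolyCM mulrAC.
Qed.
End A.
Section S.
Variables (F : fieldType) (D : nat).
Local Notation R := {mpoly F[D]}.
Definition cmx m n (A : 'M[F]_(m,n)) : 'M[R]_(m,n) := map_mx (fun c : F => c%:MP_[D]) A.

Lemma lfunZ (w : lfun F D) c p : w (c%:MP_[D] * p) = c * w p.
Proof. by rewrite mul_mpolyC linearZ. Qed.

Lemma lfun_sum (w : lfun F D) I (r : seq I) P (f : I -> R) :
  w (\sum_(i <- r | P i) f i) = \sum_(i <- r | P i) w (f i).
Proof. by rewrite raddf_sum. Qed.

Lemma mapu_cmxl (w : lfun F D) m n p (A : 'M[F]_(m,n)) (M : 'M[R]_(n,p)) :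
  map_mx w (cmx A *m M) = A *m map_mx w M.
Proof.
apply/matrixP=> i j; rewrite !mxE lfun_sum; apply: eq_bigr => k _.
by rewrite !mxE lfunZ.
Qed.

Lemma mapu_cmxr (w : lfun F D) m n p (A : 'M[F]_(n,p)) (M : 'M[R]_(m,n)) :
  map_mx w (M *m cmx A) = map_mx w M *m A.
Proof.
apply/matrixP=> i j; rewrite !mxE lfun_sum; apply: eq_bigr => k _.
by rewrite !mxE mulrC lfunZ mulrC.
Qed.

Lemma mapu_add (w : lfun F D) m n (A B : 'M[R]_(m,n)) :
  map_mx w (A + B) = map_mx w A + map_mx w B.
Proof. by apply/matrixP=> i j; rewrite !mxE raddfD. Qed.
Lemma mapu_sub (w : lfun F D) m n (A B : 'M[R]_(m,n)) :
  map_mx w (A - B) = map_mx w A - map_mx w B.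
Proof. by apply/matrixP=> i j; rewrite !mxE raddfB. Qed.
Lemma mapu_sum (w : lfun F D) m n I (r : seq I) P (f : I -> 'M[R]_(m,n)) :
  map_mx w (\sum_(i <- r | P i) f i) = \sum_(i <- r | P i) map_mx w (f i).
Proof.
apply/matrixP=> i j; rewrite !mxE summxE lfun_sum.
by rewrite summxE; apply: eq_bigr => k _; rewrite mxE.
Qed.

Lemma cmx_tr m n (A : 'M[F]_(m,n)) : (cmx A)^T = cmx A^T.
Proof. by rewrite /cmx map_trmx. Qed.
Lemma cmx1 n : cmx (1%:M : 'M[F]_n) = 1%:M.
Proof. by apply/matrixP=> i j; rewrite !mxE; case: (i == j). Qed.
Lemma cmxM m n p (A : 'M[F]_(m,n)) (B : 'M[F]_(n,p)) : cmx (A *m B) = cmx A *m cmx B.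
Proof. by rewrite /cmx map_mxM. Qed.
Lemma cmxN m n (A : 'M[F]_(m,n)) : cmx (- A) = - cmx A.
Proof. by apply/matrixP=> i j; rewrite !mxE raddfN. Qed.


Lemma trmx_sum' T m n I (r : seq I) P (f : I -> 'M[T : pzRingType]_(m,n)) :
  (\sum_(i <- r | P i) f i)^T = \sum_(i <- r | P i) (f i)^T.
Proof. exact: (raddf_sum (@trmx T m n)). Qed.
Lemma trmx_sub' (T : pzRingType) m n (A B : 'M[T]_(m,n)) : (A - B)^T = A^T - B^T.
Proof. exact: (raddfB (@trmx T m n)). Qed.

Lemma Pblk_cmx (S : blockmx F D) n : Pblk S n = \sum_(k < n.+1) cmx (S n k) *m chi F D k.
Proof. by []. Qed.

Lemma SGStE (w : lfun F D) (S : blockmx F D) i j :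
  SGSt w S i j = map_mx w (Pblk S i *m (Pblk S j)^T).
Proof.
rewrite /SGSt !Pblk_cmx mulmx_suml mapu_sum; apply: eq_bigr => k _.
rewrite trmx_sum' mulmx_sumr mapu_sum; apply: eq_bigr => l _.
rewrite trmx_mul cmx_tr !mulmxA mapu_cmxr -!mulmxA mapu_cmxl.
by rewrite /Gblk mulmxA.
Qed.

Lemma chi_rec (S : blockmx F D) k : S k k = 1%:M ->
  chi F D k = Pblk S k - \sum_(l < k) cmx (S k l) *m chi F D l.
Proof.
move=> Skk; rewrite Pblk_cmx big_ord_recr /= Skk cmx1 mul1mx.
by rewrite addrAC subrr add0r.
Qed.

Lemma ortho (w : lfun F D) (S : blockmx F D) (H : blockdiag F D) :
  gauss_borel w S H -> forall n k, (k < n)%N ->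
  map_mx w (Pblk S n *m (chi F D k)^T) = 0.
Proof.
case=> _ S1 S0 _ n k; elim/ltn_ind: k => k IH kn.
rewrite (chi_rec (S1 k)) trmx_sub' mulmxBr mapu_sub -SGStE S0; last first.
  by rewrite neq_ltn kn orbT.
rewrite trmx_sum' mulmx_sumr mapu_sum big1 ?subr0 //= => l _.
rewrite trmx_mul cmx_tr mulmxA mapu_cmxr IH ?mul0mx //.
exact: ltn_trans kn.
Qed.


Lemma Hunit (u : lfun F D) (S : blockmx F D) (H : blockdiag F D) :
  quasi_definite u -> gauss_borel u S H -> forall m, H m \in unitmx.
Proof.
move=> qd gb m; have [_ S1 S0 SH] := gb.
rewrite -row_free_unit; apply/inj_row_free => x xH.
set p : R := (cmx x *m Pblk S m) 0 0.
have orth k : (k <= m)%N -> map_mx u (cmx x *m Pblk S m *m (chi F D k)^T) = 0.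
  rewrite leq_eqVlt => /orP[/eqP->|km]; last first.
    by rewrite -mulmxA mapu_cmxl (ortho gb km) mulmx0.
  rewrite -mulmxA mapu_cmxl (chi_rec (S1 m)) trmx_sub' mulmxBr mapu_sub.
  rewrite -SGStE SH trmx_sum' mulmx_sumr mapu_sum big1 ?subr0 ?mulmxBr ?xH ?subr0 //.
  move=> l _; rewrite trmx_mul cmx_tr mulmxA mapu_cmxr (ortho gb (ltn_ord l)).
  by rewrite mul0mx.
have pX mm : mm \in monsT D m.+1 -> u (p * 'X_[mm]) = 0.
  rewrite mem_monsT ltnS => dm.
  have Hin : mm \in mons D (mdeg mm) by rewrite mem_mons.
  have i0 : (index mm (mons D (mdeg mm)) < rk D (mdeg mm))%N by rewrite index_mem.
  move: (orth _ dm) => /matrixP/(_ 0 (Ordinal i0)).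
  rewrite !mxE big_ord1 !mxE /= nth_index //.
  by move=> <-; congr (u (_ * _)); rewrite /p mxE.
have pcoef mm : p@_mm = \sum_(k < m.+1) \sum_(j < rk D k)
    (x *m S m k) 0 j * (nth 0%MM (mons D k) j == mm)%:R.
  rewrite /p Pblk_cmx mulmx_sumr summxE raddf_sum; apply: eq_bigr => k _.
  rewrite mulmxA -cmxM !mxE raddf_sum; apply: eq_bigr => j _.
  by rewrite !mxE; rewrite -[LHS]/(mcoeff mm _) mcoeffCM mcoeffX.
have pout mm : mm \notin monsT D m.+1 -> p@_mm = 0.
  move=> Hm; rewrite pcoef big1 // => k _; rewrite big1 // => j _.
  case: eqP => [E|_]; last by rewrite mulr0.
  move: Hm; rewrite -E mem_monsT.
  have : nth 0%MM (mons D k) j \in mons D k by rewrite mem_nth.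
  by rewrite mem_mons => /eqP->; rewrite ltn_ord.
set t := monsT D m.+1.
have pE : p = \sum_(a < size t) p@_(nth 0%MM t a) *: 'X_[nth 0%MM t a].
  rewrite {1}(mpolyE p) (@big_msupp_sub _ _ _ _ _ t) ?uniq_monsT //.
  - by rewrite (big_nth 0%MM) big_mkord.
  - move=> mm; apply: contraTT => Hm; rewrite -mcoeff_eq0 pout //.
  - by move=> mm; rewrite -mcoeff_eq0 => /eqP->; rewrite scale0r.
pose Y := \row_(a < size t) p@_(nth 0%MM t a).
have YG : Y *m Gtrunc u m.+1 = 0.
  apply/rowP => b; rewrite !mxE -[RHS](pX (nth 0%MM t b)) ?mem_nth //.
  rewrite [in RHS]pE mulr_suml raddf_sum; apply: eq_bigr => a _.
  by rewrite !mxE big_ord1 !mxE -scalerAl -mul_mpolyC; exact/esym/lfunZ.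
have Y0 : Y = 0.
  by rewrite -[Y]mulmx1 -(mulmxV (qd m.+1)) mulmxA YG mul0mx.
have p0 : p = 0.
  apply/mpolyP => mm; rewrite mcoeff0.
  case Hm: (mm \in t); last by rewrite pout ?Hm.
  move/matrixP: Y0 => /(_ 0 (Ordinal (etrans (index_mem mm t) Hm))).
  by rewrite !mxE /= nth_index.
apply/rowP => i; rewrite mxE.
have := pcoef (nth 0%MM (mons D m) i); rewrite p0 mcoeff0 big_ord_recr /=.
rewrite big1 ?add0r; last first.
  move=> k _; rewrite big1 // => j _.
  case: eqP => [E|_]; last by rewrite mulr0.
  have : nth 0%MM (mons D m) i \in mons D m by rewrite mem_nth.
  rewrite -E mem_mons; have : nth 0%MM (mons D k) j \in mons D k by rewrite mem_nth.
  rewrite mem_mons => /eqP dk /eqP dm; exfalso; move: (ltn_ord k).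
  by rewrite -dk dm ltnn.
rewrite (bigD1 i) //= eqxx mulr1 big1 ?addr0; last first.
  move=> j /negbTE ji; rewrite nth_uniq ?uniq_mons // (_ : (j == i :> nat) = false) ?mulr0 //.
by rewrite S1 mulmx1 => ->.
Qed.


Lemma Pblk_split (S : blockmx F D) n : S n n = 1%:M ->
  Pblk S n = chi F D n + \sum_(k < n) cmx (S n k) *m chi F D k.
Proof. by move=> Snn; rewrite (chi_rec Snn) subrK. Qed.

Lemma orthoL (w : lfun F D) (S : blockmx F D) (H : blockdiag F D) n N r
  (f : forall k, 'M[F]_(r, rk D k)) :
  gauss_borel w S H -> (N <= n)%N ->
  map_mx w (Pblk S n *m (\sum_(k < N) cmx (f k) *m chi F D k)^T) = 0.
Proof.
move=> gb Nn; rewrite trmx_sum' mulmx_sumr mapu_sum big1 // => k _.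
rewrite trmx_mul cmx_tr mulmxA mapu_cmxr (ortho gb) ?mul0mx //.
exact: leq_trans (ltn_ord k) Nn.
Qed.

Lemma mapu_tr (w : lfun F D) m n (A : 'M[R]_(m,n)) : map_mx w A^T = (map_mx w A)^T.
Proof. by apply/matrixP=> i j; rewrite !mxE. Qed.

Definition spanP (S : blockmx F D) r N (q : 'M[R]_(r,1)) :=
  exists B : forall m, 'M[F]_(r, rk D m), q = \sum_(m < N) cmx (B m) *m Pblk S m.

Lemma spanP0 S r N : spanP S N (0 : 'M[R]_(r,1)).
Proof.
exists (fun m => 0); rewrite big1 // => m _.
by rewrite (_ : cmx 0 = 0) ?mul0mx //; apply/matrixP=> i j; rewrite !mxE.
Qed.

Lemma spanPD S r N (q1 q2 : 'M[R]_(r,1)) : spanP S N q1 -> spanP S N q2 -> spanP S N (q1 + q2).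
Proof.
move=> [B1 ->] [B2 ->]; exists (fun m => B1 m + B2 m); rewrite -big_split.
apply: eq_bigr => m _; rewrite /= -mulmxDl; congr (_ *m _).
by apply/matrixP=> i j; rewrite !mxE rmorphD.
Qed.

Lemma spanPM S r r' N (A : 'M[F]_(r', r)) (q : 'M[R]_(r,1)) :
  spanP S N q -> spanP S N (cmx A *m q).
Proof.
move=> [B ->]; exists (fun m => A *m B m); rewrite mulmx_sumr.
by apply: eq_bigr => m _; rewrite mulmxA cmxM.
Qed.

Lemma spanPN S r N (q : 'M[R]_(r,1)) : spanP S N q -> spanP S N (- q).
Proof.
move=> sq; have := spanPM (- 1%:M) sq; rewrite cmxN cmx1 mulNmx mul1mx //.
Qed.

Lemma spanPW S r N N' (q : 'M[R]_(r,1)) : (N <= N')%N -> spanP S N q -> spanP S N' q.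
Proof.
move=> NN [B ->]; exists (fun m => if (m < N)%N then B m else 0).
rewrite (big_ord_widen N' (fun m => cmx (B m) *m Pblk S m)) // big_mkcond.
apply: eq_bigr => m _; case: ifP => // _.
by rewrite (_ : cmx 0 = 0) ?mul0mx //; apply/matrixP=> i j; rewrite !mxE.
Qed.

Lemma spanP_P S k : spanP S k.+1 (Pblk S k).
Proof.
exists (fun m => if m == k then conform_mx 0 (1%:M : 'M[F]_(rk D k)) else 0).
rewrite (bigD1 ord_max) //= eqxx conform_mx_id cmx1 mul1mx big1 ?addr0 // => m.
rewrite -val_eqE /= => /negbTE ->.
by rewrite (_ : cmx 0 = 0) ?mul0mx //; apply/matrixP=> i j; rewrite !mxE.
Qed.

Lemma spanP_chi (S : blockmx F D) (S1 : forall i, S i i = 1%:M) k :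
  spanP S k.+1 (chi F D k).
Proof.
elim/ltn_ind: k => k IH; rewrite (chi_rec (S1 k)).
apply: spanPD; first exact: spanP_P.
apply: spanPN; apply: (big_ind (spanP S k.+1)); [exact: spanP0| exact: spanPD|].
move=> l _; apply: spanPM; apply: spanPW (IH l (ltn_ord l)).
exact: ltnW (ltn_ord l).
Qed.


Lemma trmx_add' m n (A B : 'M[R]_(m,n)) : (A + B)^T = A^T + B^T.
Proof. exact: (raddfD (@trmx _ m n)). Qed.
Lemma cmxB m n (A B : 'M[F]_(m,n)) : cmx (A - B) = cmx A - cmx B.
Proof. by apply/matrixP=> i j; rewrite !mxE rmorphB. Qed.
Lemma inYM (a b : R) : inY (a * b) = inY a * inY b.
Proof. exact: (rmorphM (map_mpoly (@mpolyC D F))). Qed.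
Lemma inYC (c : F) : inY (c%:MP_[D]) = c%:MP_[D]%:MP_[D].
Proof. by rewrite /inY map_mpolyC. Qed.

Lemma ortho_split (w : lfun F D) (S S' : blockmx F D) (H : blockdiag F D) n :
  gauss_borel w S H -> S' n n = 1%:M ->
  map_mx w (Pblk S n *m (Pblk S' n)^T) = map_mx w (Pblk S n *m (chi F D n)^T).
Proof.
move=> gb S'1; rewrite [X in _ *m X^T](Pblk_split S'1) trmx_add' mulmxDr mapu_add.
by rewrite (orthoL (fun k => S' n k) gb) ?addr0.
Qed.

End S.

Theorem mainTheorem14 (F : fieldType) (D : nat)
  (u v uh : lfun F D) (uhE : forall p, uh p = u p + v p)
  (S Sh : blockmx F D) (H Hh : blockdiag F D) :
  quasi_definite u -> quasi_definite uh ->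
  gauss_borel u S H -> gauss_borel uh Sh Hh ->
  forall n : nat,
    Pblk Sh n = Pblk S n -
      map_mx (actY v)
        (map_mx (@inY F D) (Pblk Sh n) *m (CDkernel S H n)%:M)
  /\ Hh n = H n + map_mx v (Pblk Sh n *m (Pblk S n)^T).
Proof.
move=> qdu qduh gb gbh n.
have [Sup S1 S0 SH] := gb; have [Shup Sh1 Sh0 ShH] := gbh.
have uhM m1 m2 (A : 'M[{mpoly F[D]}]_(m1,m2)) : map_mx uh A = map_mx u A + map_mx v A.
  by apply/matrixP => i j; rewrite !mxE uhE.
split; last first.
  rewrite -ShH -SH !SGStE.
  have e1 := ortho_split gbh (Sh1 n).
  have e2 := ortho_split gbh (S1 n).
  have eS := ortho_split gb (S1 n).
  have eSh := ortho_split gb (Sh1 n).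
  have e3 : map_mx u (Pblk Sh n *m (Pblk S n)^T) = map_mx u (Pblk S n *m (Pblk S n)^T).
    rewrite -[Pblk Sh n *m _]trmxK trmx_mul trmxK mapu_tr eSh -eS -mapu_tr.
    by rewrite trmx_mul trmxK.
  by rewrite e1 -e2 uhM e3.
have Delta : Pblk Sh n - Pblk S n = \sum_(k < n) cmx D (Sh n k - S n k) *m chi F D k.
  rewrite {1}(Pblk_split (Sh1 n)) (Pblk_split (S1 n)) opprD addrACA subrr add0r.
  by rewrite -sumrB; apply: eq_bigr => k _; rewrite cmxB mulmxBl.
have spD : spanP S n (Pblk Sh n - Pblk S n).
  rewrite Delta; apply: (big_ind (spanP S n)); [exact: spanP0| exact: spanPD|].
  move=> k _; apply: spanPM; apply: spanPW (spanP_chi S1 k); exact: ltn_ord.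
case: spD => B HB.
have HU := Hunit qdu gb.
have Bj (j : 'I_n) : B j = - (map_mx v (Pblk Sh n *m (Pblk S j)^T) *m invmx (H j)).
  suff BH : B j *m H j = - map_mx v (Pblk Sh n *m (Pblk S j)^T).
    by rewrite -[B j](mulmxK (HU j)) BH mulNmx.
  have := congr1 (fun Q => map_mx u (Q *m (Pblk S j)^T)) HB.
  rewrite /= mulmxBl mapu_sub -(SGStE u S n j) S0; last first.
    by rewrite neq_ltn ltn_ord orbT.
  have -> : map_mx u (Pblk Sh n *m (Pblk S j)^T) =
      map_mx uh (Pblk Sh n *m (Pblk S j)^T) - map_mx v (Pblk Sh n *m (Pblk S j)^T).
    by rewrite uhM addrK.
  rewrite [in map_mx uh _]Pblk_cmx (orthoL (fun k => S j k) gbh) ?ltn_ord // sub0r subr0 => ->.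
  rewrite mulmx_suml mapu_sum (bigD1 j) //= -mulmxA mapu_cmxl -SGStE SH.
  rewrite big1 ?addr0 // => m /negbTE mj.
  by rewrite -mulmxA mapu_cmxl -SGStE S0 ?mulmx0 //; exact: negbT mj.
have DeltaE : Pblk Sh n - Pblk S n = - \sum_(m < n)
    cmx D (map_mx v (Pblk Sh n *m (Pblk S m)^T) *m invmx (H m)) *m Pblk S m.
  by rewrite HB -sumrN; apply: eq_bigr => m _; rewrite Bj cmxN mulNmx.
suff Key : map_mx (actY v) (map_mx (@inY F D) (Pblk Sh n) *m (CDkernel S H n)%:M) =
    \sum_(m < n) cmx D (map_mx v (Pblk Sh n *m (Pblk S m)^T) *m invmx (H m)) *m Pblk S m.
  by rewrite Key -DeltaE addrC subrK.
rewrite mul_mx_scalar; apply/matrixP => i j; rewrite [j]ord1 !mxE /CDkernel mulr_suml actY_sum.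
rewrite [RHS]summxE; apply: eq_bigr => m _.
rewrite !mxE mulr_suml actY_sum; apply: eq_bigr => s _.
rewrite !mxE !mulr_suml actY_sum (raddf_sum (@mpolyC D F)) mulr_suml.
apply: eq_bigr => r _; rewrite !mxE big_ord1 !mxE.
rewrite [X in actY v X](_ : _ = inY (Pblk Sh n i 0 * Pblk S m r 0 *
   (invmx (H m) r s)%:MP_[D]) * inX (Pblk S m s 0)); last first.
  by rewrite !inYM inYC [LHS]mulrC !mulrA.
rewrite actY_YX [_ * _%:MP_[D]]mulrC lfunZ mulrC.
by rewrite mulrC (mulrC (invmx _ _ _)).
Qed.
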